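(* Let $S$ be a self-adjoint subspace in $X^2$, and let $A$ and $S+A$ be closed Hermitian subspaces in $X^2$, with $D(S)\subset D(A)$. Let $Q:A(0)^\perp\to S(0)^\perp$ be the orthogonal projection. If $QA_s$ is $S_s$-compact, then $S+A$ is a self-adjoint subspace in $X^2$.
   Context: $X$ is a complex Hilbert space and $X^2=X\times X$ carries the inner product $\langle (x,f),(y,g)\rangle=\langle x,y\rangle+\langle f,g\rangle$. A subspace $T$ in $X^2$ means a linear subspace of $X^2$ (a linear relation); a linear operator in $X$ is identified with its graph. Notation: $D(T)=\{x:(x,f)\in T \text{ for some } f\}$, $T(x)=\{f:(x,f)\in T\}$. The adjoint is $T^*=\{(y,g)\in X^2:\langle g,x\rangle=\langle y,f\rangle \text{ for all }(x,f)\in T\}$; $T$ is Hermitian if $T\subset T^*$ and self-adjoint if $T=T^*$. For subspaces $S,A$ in $X^2$, $S+A=\{(x,f+g):(x,f)\in S,(x,g)\in A\}$. For a closed subspace $T$, set $T_\infty=\{(0,g)\in X^2:(0,g)\in T\}$ and $T_s=T\ominus T_\infty$ (orthogonal complement of $T_\infty$ in $T$), so $T=T_s\oplus T_\infty$; $T_s$ is the graph of a linear operator (the operator part of $T$) with $D(T_s)=D(T)$ and $R(T_s)\subset T(0)^\perp$. For linear operators $U,V$ in $X$ with $D(V)\subset D(U)$: $U$ is $V$-compact if $U|_{D(V)}$ is compact as a map from $(D(V),\|\cdot\|_V)$ into $X$, where $\|x\|_V=\|x\|+\|Vx\|$. *)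

(* Defs.v *)
From Stdlib Require Import Reals.
Open Scope R_scope.

Record Cx := mkC { re : R; im : R }.
Definition C0 : Cx := mkC 0 0.
Definition C1 : Cx := mkC 1 0.
Definition Cadd (a b : Cx) : Cx := mkC (re a + re b) (im a + im b).
Definition Cmul (a b : Cx) : Cx :=
  mkC (re a * re b - im a * im b) (re a * im b + im a * re b).
Definition Cconj (a : Cx) : Cx := mkC (re a) (- im a).

Record HilbertSpace := {
  carrier :> Type;
  vzero : carrier;
  vadd : carrier -> carrier -> carrier;
  vopp : carrier -> carrier;
  vscal : Cx -> carrier -> carrier;
  inner : carrier -> carrier -> Cx;
  vadd_assoc : forall x y z, vadd x (vadd y z) = vadd (vadd x y) z;
  vadd_comm : forall x y, vadd x y = vadd y x;
  vadd_zero : forall x, vadd x vzero = x;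
  vadd_opp : forall x, vadd x (vopp x) = vzero;
  vscal_one : forall x, vscal C1 x = x;
  vscal_mul : forall a b x, vscal a (vscal b x) = vscal (Cmul a b) x;
  vscal_addv : forall a x y, vscal a (vadd x y) = vadd (vscal a x) (vscal a y);
  vscal_adds : forall a b x, vscal (Cadd a b) x = vadd (vscal a x) (vscal b x);
  inner_addl : forall x y z, inner (vadd x y) z = Cadd (inner x z) (inner y z);
  inner_scall : forall a x y, inner (vscal a x) y = Cmul a (inner x y);
  inner_conj : forall x y, inner y x = Cconj (inner x y);
  inner_pos : forall x, 0 <= re (inner x x);
  inner_def : forall x, re (inner x x) = 0 -> x = vzero;
  complete : forall u : nat -> carrier,
    (forall eps, eps > 0 -> exists N, forall m n, (N <= m)%nat -> (N <= n)%nat ->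
        sqrt (re (inner (vadd (u m) (vopp (u n))) (vadd (u m) (vopp (u n))))) < eps) ->
    exists l, forall eps, eps > 0 -> exists N, forall n, (N <= n)%nat ->
        sqrt (re (inner (vadd (u n) (vopp l)) (vadd (u n) (vopp l)))) < eps
}.

Arguments vzero {h}.
Arguments vadd {h}.
Arguments vopp {h}.
Arguments vscal {h}.
Arguments inner {h}.

Section Defs.
Variable X : HilbertSpace.

Definition vsub (x y : X) : X := vadd x (vopp y).
Definition norm (x : X) : R := sqrt (re (inner x x)).

Definition converges_to (u : nat -> X) (l : X) : Prop :=
  forall eps, eps > 0 -> exists N, forall n, (N <= n)%nat -> norm (vsub (u n) l) < eps.

(** A subspace in X^2 (linear relation), represented by its membership predicate. *)
Definition relation2 := X -> X -> Prop.

Definition is_subspace (T : relation2) : Prop :=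
  T vzero vzero /\
  (forall x f y g, T x f -> T y g -> T (vadd x y) (vadd f g)) /\
  (forall a x f, T x f -> T (vscal a x) (vscal a f)).

(** closedness in X^2 with the product norm: equivalently componentwise convergence *)
Definition is_closed (T : relation2) : Prop :=
  forall (x f : nat -> X) (y g : X),
    (forall n, T (x n) (f n)) -> converges_to x y -> converges_to f g -> T y g.

Definition dom (T : relation2) (x : X) : Prop := exists f, T x f.
Definition img_at (T : relation2) (x : X) (f : X) : Prop := T x f.

Definition adjoint (T : relation2) : relation2 :=
  fun y g => forall x f, T x f -> inner g x = inner y f.

Definition hermitian (T : relation2) : Prop :=
  forall x f, T x f -> adjoint T x f.

Definition self_adjoint (T : relation2) : Prop :=
  forall x f, T x f <-> adjoint T x f.

Definition rel_sum (S A : relation2) : relation2 :=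
  fun x h => exists f g, S x f /\ A x g /\ h = vadd f g.

Definition perp (M : X -> Prop) : X -> Prop :=
  fun y => forall z, M z -> inner y z = C0.

(** T_∞ = {(0,g) ∈ T} and T_s = T ⊖ T_∞, i.e. the elements of T orthogonal
    (in X^2) to every (0,g) ∈ T. *)
Definition T_infty (T : relation2) : relation2 :=
  fun x g => x = vzero /\ T x g.

Definition op_part (T : relation2) : relation2 :=
  fun x f => T x f /\
    (forall y g, T_infty T y g -> Cadd (inner x y) (inner f g) = C0).

Definition orth_proj (M : X -> Prop) : relation2 :=
  fun x y => M y /\ perp M (vsub x y).

Definition rel_comp (U V : relation2) : relation2 :=
  fun x h => exists f, V x f /\ U f h.

(** U is V-compact (for operators U, V given by graphs with D(V) ⊂ D(U)):
    U restricted to D(V) is compact from (D(V), ‖·‖_V) into X, i.e. every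
    ‖·‖_V-bounded sequence in D(V) has a subsequence whose U-image converges
    in X. *)
Definition rel_compact (U V : relation2) : Prop :=
  forall (x v u : nat -> X) (M : R),
    (forall n, V (x n) (v n)) ->
    (forall n, U (x n) (u n)) ->
    (forall n, norm (x n) + norm (v n) <= M) ->
    exists (phi : nat -> nat) (l : X),
      (forall n, (phi n < phi (S n))%nat) /\
      converges_to (fun n => u (phi n)) l.

End Defs.

Arguments vsub {X}.
Arguments norm {X}.
Arguments converges_to {X}.
Arguments is_subspace {X}.
Arguments is_closed {X}.
Arguments dom {X}.
Arguments img_at {X}.
Arguments adjoint {X}.
Arguments hermitian {X}.
Arguments self_adjoint {X}.
Arguments rel_sum {X}.
Arguments perp {X}.
Arguments T_infty {X}.
Arguments op_part {X}.
Arguments orth_proj {X}.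
Arguments rel_comp {X}.
Arguments rel_compact {X}.

(* Main.v *)
Require Import Defs.
From Stdlib Require Import Reals Lra Lia Psatz ClassicalEpsilon Classical.
Open Scope R_scope.

Lemma Cx_ext (a b : Cx) : re a = re b -> im a = im b -> a = b.
Proof. destruct a, b; simpl; intros; subst; reflexivity. Qed.

Definition Copp (a : Cx) : Cx := mkC (- re a) (- im a).
Definition rc (c : R) : Cx := mkC c 0.
Definition nsq {X : HilbertSpace} (x : X) : R := re (inner x x).

Section Alg.
Context {X : HilbertSpace}.
Implicit Types x y z a b c d : X.

Lemma vadd_0l x : vadd vzero x = x.
Proof. rewrite vadd_comm. apply vadd_zero. Qed.
Lemma vadd_oppl x : vadd (vopp x) x = vzero.
Proof. rewrite vadd_comm. apply vadd_opp. Qed.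
Lemma vadd_cancel a x y : vadd a x = vadd a y -> x = y.
Proof.
  intro H. rewrite <- (vadd_0l x), <- (vadd_0l y), <- (vadd_oppl a).
  rewrite <- !vadd_assoc, H. reflexivity.
Qed.
Lemma vopp_unique x y : vadd x y = vzero -> y = vopp x.
Proof. intro H. apply (vadd_cancel x). rewrite H, vadd_opp. reflexivity. Qed.
Lemma vscal_C0 x : vscal C0 x = vzero.
Proof.
  apply (vadd_cancel (vscal C0 x)). rewrite vadd_zero, <- vscal_adds.
  f_equal. apply Cx_ext; simpl; lra.
Qed.
Lemma vscal_v0 (a : Cx) : vscal a (@vzero X) = vzero.
Proof.
  apply (vadd_cancel (vscal a vzero)). rewrite vadd_zero, <- vscal_addv, vadd_zero.
  reflexivity.
Qed.
Lemma vscal_m1 x : vscal (mkC (-1) 0) x = vopp x.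
Proof.
  apply vopp_unique. rewrite <- (vscal_one _ x) at 1. rewrite <- vscal_adds.
  replace (Cadd Defs.C1 (mkC (-1) 0)) with C0 by (apply Cx_ext; simpl; lra).
  apply vscal_C0.
Qed.
Lemma vopp_opp x : vopp (vopp x) = x.
Proof. symmetry. apply vopp_unique. apply vadd_oppl. Qed.
Lemma vopp0 : vopp (@vzero X) = vzero.
Proof. symmetry. apply vopp_unique. apply vadd_zero. Qed.
Lemma vadd_AC a b c : vadd a (vadd b c) = vadd b (vadd a c).
Proof. rewrite !vadd_assoc, (vadd_comm _ a b). reflexivity. Qed.
Lemma vadd_swap4 a b c d : vadd (vadd a b) (vadd c d) = vadd (vadd a c) (vadd b d).
Proof. rewrite <- !vadd_assoc. f_equal. apply vadd_AC. Qed.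
Lemma vopp_add x y : vopp (vadd x y) = vadd (vopp x) (vopp y).
Proof.
  symmetry. apply vopp_unique. rewrite vadd_swap4, !vadd_opp, vadd_zero. reflexivity.
Qed.
Lemma vscal_opp (a : Cx) x : vscal a (vopp x) = vopp (vscal a x).
Proof.
  apply vopp_unique. rewrite <- vscal_addv, vadd_opp. apply vscal_v0.
Qed.
Lemma vopp_scal (a : Cx) x : vopp (vscal a x) = vscal (Copp a) x.
Proof.
  symmetry. apply vopp_unique. rewrite <- vscal_adds.
  replace (Cadd a (Copp a)) with C0 by (apply Cx_ext; simpl; lra). apply vscal_C0.
Qed.
Lemma vsub_self x : vsub x x = vzero.
Proof. apply vadd_opp. Qed.
Lemma vsub_0r x : vsub x vzero = x.
Proof. unfold vsub. rewrite vopp0. apply vadd_zero. Qed.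
Lemma vsub_0l x : vsub vzero x = vopp x.
Proof. unfold vsub. apply vadd_0l. Qed.
Lemma vsub_sub4 a b c d : vsub (vsub a b) (vsub c d) = vsub (vsub a c) (vsub b d).
Proof.
  unfold vsub. rewrite !vopp_add, !vopp_opp. rewrite vadd_swap4. reflexivity.
Qed.
Lemma vsub_eq0 x y : vsub x y = vzero -> x = y.
Proof.
  unfold vsub. intro H. apply vopp_unique in H. rewrite <- (vopp_opp x), <- H, vopp_opp.
  reflexivity.
Qed.
Lemma vadd_sub_cancel x y : vadd y (vsub x y) = x.
Proof. unfold vsub. rewrite vadd_AC, vadd_opp, vadd_zero. reflexivity. Qed.
Lemma vsub_add_cancel x y : vsub (vadd x y) y = x.
Proof. unfold vsub. rewrite <- vadd_assoc, vadd_opp, vadd_zero. reflexivity. Qed.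
Lemma vsub_sub_cancel x y : vsub x (vsub x y) = y.
Proof.
  unfold vsub. rewrite vopp_add, vopp_opp, vadd_assoc, vadd_opp, vadd_0l. reflexivity.
Qed.
Lemma vopp_sub x y : vopp (vsub x y) = vsub y x.
Proof. unfold vsub. rewrite vopp_add, vopp_opp. apply vadd_comm. Qed.
Lemma vscal_sub (a : Cx) x y : vscal a (vsub x y) = vsub (vscal a x) (vscal a y).
Proof. unfold vsub. rewrite vscal_addv, vscal_opp. reflexivity. Qed.
Lemma vadd_sub4 a b c d : vsub (vadd a b) (vadd c d) = vadd (vsub a c) (vsub b d).
Proof. unfold vsub. rewrite vopp_add. apply vadd_swap4. Qed.

Lemma inner_addr x y z : inner z (vadd x y) = Cadd (inner z x) (inner z y).
Proof.
  rewrite (inner_conj _ (vadd x y) z), inner_addl, (inner_conj _ x z), (inner_conj _ y z).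
  apply Cx_ext; simpl; lra.
Qed.
Lemma inner_scalr (a : Cx) x y : inner x (vscal a y) = Cmul (Cconj a) (inner x y).
Proof.
  rewrite (inner_conj _ (vscal a y) x), inner_scall, (inner_conj _ y x).
  apply Cx_ext; simpl; lra.
Qed.
Lemma inner_0l y : inner vzero y = C0.
Proof.
  rewrite <- (vscal_C0 y) at 1. rewrite inner_scall. apply Cx_ext; simpl; lra.
Qed.
Lemma inner_0r y : inner y vzero = C0.
Proof. rewrite inner_conj, inner_0l. apply Cx_ext; simpl; lra. Qed.
Lemma inner_oppl x y : inner (vopp x) y = Copp (inner x y).
Proof. rewrite <- vscal_m1, inner_scall. apply Cx_ext; simpl; lra. Qed.
Lemma inner_oppr x y : inner y (vopp x) = Copp (inner y x).
Proof. rewrite <- vscal_m1, inner_scalr. apply Cx_ext; simpl; lra. Qed.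
Lemma inner_subl x y z : inner (vsub x y) z = Cadd (inner x z) (Copp (inner y z)).
Proof. unfold vsub. rewrite inner_addl, inner_oppl. reflexivity. Qed.
Lemma inner_subr x y z : inner z (vsub x y) = Cadd (inner z x) (Copp (inner z y)).
Proof. unfold vsub. rewrite inner_addr, inner_oppr. reflexivity. Qed.
Lemma im_inner_self x : im (inner x x) = 0.
Proof. pose proof (f_equal im (inner_conj _ x x)). simpl in H. lra. Qed.
Lemma re_inner_sym x y : re (inner y x) = re (inner x y).
Proof. rewrite inner_conj. reflexivity. Qed.
Lemma im_inner_sym x y : im (inner y x) = - im (inner x y).
Proof. rewrite inner_conj. reflexivity. Qed.

Lemma nsq_ge0 x : 0 <= nsq x.
Proof. apply inner_pos. Qed.
Lemma nsq_add x y : nsq (vadd x y) = nsq x + nsq y + 2 * re (inner x y).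
Proof.
  unfold nsq. rewrite inner_addl, !inner_addr. simpl. rewrite (re_inner_sym x y). lra.
Qed.
Lemma nsq_opp x : nsq (vopp x) = nsq x.
Proof. unfold nsq. rewrite inner_oppl, inner_oppr. simpl. lra. Qed.
Lemma nsq_scal (a : Cx) x : nsq (vscal a x) = (re a * re a + im a * im a) * nsq x.
Proof.
  unfold nsq. rewrite inner_scall, inner_scalr. simpl. rewrite im_inner_self. ring.
Qed.
Lemma nsq_sub x y : nsq (vsub x y) = nsq x + nsq y - 2 * re (inner x y).
Proof.
  unfold vsub. rewrite nsq_add, nsq_opp. unfold nsq. rewrite inner_oppr. simpl. lra.
Qed.
Lemma nsq_zero x : nsq x = 0 -> x = vzero.
Proof. apply inner_def. Qed.
Lemma nsq_0 : nsq (@vzero X) = 0.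
Proof. unfold nsq. rewrite inner_0l. reflexivity. Qed.

Lemma CS_sq x y : re (inner x y) * re (inner x y) <= nsq x * nsq y.
Proof.
  set (b := re (inner x y)). set (a := nsq y). set (c := nsq x).
  destruct (Req_dec a 0) as [Ha|Ha].
  - apply nsq_zero in Ha. unfold b. rewrite Ha, inner_0r. simpl.
    pose proof (nsq_ge0 x). pose proof (nsq_ge0 y). unfold a; unfold c. nra.
  - assert (Hapos : 0 < a) by (pose proof (nsq_ge0 y); unfold a in *; lra).
    set (t := - b / a).
    pose proof (nsq_ge0 (vadd x (vscal (rc t) y))) as H.
    rewrite nsq_add, nsq_scal in H. unfold nsq in H at 1.
    rewrite inner_scalr in H. simpl in H.
    fold c a b in H.
    assert (H2 : 0 <= c + t*t*a + 2*t*b) by (unfold c, nsq; lra).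
    assert (Ht : a * (c + t*t*a + 2*t*b) = a * c - b * b) by (unfold t; field; exact Ha).
    assert (0 <= a * (c + t*t*a + 2*t*b)) by (apply Rmult_le_pos; lra).
    nra.
Qed.

Lemma norm_ge0 x : 0 <= norm x.
Proof. apply sqrt_pos. Qed.
Lemma norm_sq x : norm x * norm x = nsq x.
Proof. apply sqrt_sqrt, nsq_ge0. Qed.
Lemma le_sq (p q : R) : 0 <= p -> 0 <= q -> p * p <= q * q -> p <= q.
Proof. intros. destruct (Rle_or_lt p q); nra. Qed.
Lemma CS_re x y : Rabs (re (inner x y)) <= norm x * norm y.
Proof.
  pose proof (norm_ge0 x). pose proof (norm_ge0 y).
  apply le_sq; [apply Rabs_pos| nra |].
  rewrite <- Rabs_mult, Rabs_pos_eq by nra.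
  replace (norm x * norm y * (norm x * norm y)) with ((norm x * norm x) * (norm y * norm y)) by ring.
  rewrite !norm_sq. apply CS_sq.
Qed.
Definition ci : Cx := mkC 0 1.
Lemma re_i x y : re (inner x (vscal ci y)) = im (inner x y).
Proof. rewrite inner_scalr. simpl. ring. Qed.
Lemma norm_scal (a : Cx) x : norm (vscal a x) = sqrt (re a * re a + im a * im a) * norm x.
Proof.
  unfold norm. fold (nsq (vscal a x)). rewrite nsq_scal. apply sqrt_mult.
  nra. apply nsq_ge0.
Qed.
Lemma norm_i x : norm (vscal ci x) = norm x.
Proof. rewrite norm_scal. simpl. replace (0*0+1*1) with 1 by ring. rewrite sqrt_1. ring. Qed.
Lemma CS_im x y : Rabs (im (inner x y)) <= norm x * norm y.
Proof. rewrite <- re_i, <- (norm_i y). apply CS_re. Qed.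
Lemma norm_rc (c : R) x : norm (vscal (rc c) x) = Rabs c * norm x.
Proof.
  rewrite norm_scal. simpl. replace (c * c + 0 * 0) with (Rsqr c) by (unfold Rsqr; ring).
  rewrite sqrt_Rsqr_abs. reflexivity.
Qed.
Lemma norm_add x y : norm (vadd x y) <= norm x + norm y.
Proof.
  pose proof (norm_ge0 x). pose proof (norm_ge0 y).
  apply le_sq; [apply norm_ge0|lra|].
  rewrite norm_sq, nsq_add.
  replace ((norm x + norm y) * (norm x + norm y)) with
    (norm x * norm x + norm y * norm y + 2 * (norm x * norm y)) by ring.
  rewrite !norm_sq. pose proof (CS_re x y). pose proof (Rle_abs (re (inner x y))). lra.
Qed.
Lemma norm_opp x : norm (vopp x) = norm x.
Proof. unfold norm. fold (nsq (vopp x)). rewrite nsq_opp. reflexivity. Qed.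
Lemma norm_sub_sym x y : norm (vsub x y) = norm (vsub y x).
Proof. rewrite <- vopp_sub, norm_opp. reflexivity. Qed.
Lemma norm_zero x : norm x = 0 -> x = vzero.
Proof.
  intro H. apply nsq_zero. rewrite <- norm_sq, H. ring.
Qed.
Lemma norm_0 : norm (@vzero X) = 0.
Proof. unfold norm. fold (@nsq X vzero). rewrite nsq_0. apply sqrt_0. Qed.
Lemma vsub_chain x y z : vsub x z = vadd (vsub x y) (vsub y z).
Proof.
  unfold vsub. rewrite <- vadd_assoc. f_equal. rewrite vadd_assoc, vadd_oppl, vadd_0l.
  reflexivity.
Qed.
Lemma norm_tri x y z : norm (vsub x z) <= norm (vsub x y) + norm (vsub y z).
Proof. rewrite (vsub_chain x y z). apply norm_add. Qed.
Lemma norm_sub_le x y : norm x <= norm y + norm (vsub x y).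
Proof.
  pose proof (norm_tri x y vzero). rewrite !vsub_0r in H. lra.
Qed.
End Alg.

Definition cauchy {X : HilbertSpace} (u : nat -> X) : Prop :=
  forall eps, eps > 0 -> exists N, forall m n, (N <= m)%nat -> (N <= n)%nat ->
     norm (vsub (u m) (u n)) < eps.

Lemma complete' {X : HilbertSpace} (u : nat -> X) : cauchy u -> exists l, converges_to u l.
Proof. intro H. exact (complete X u H). Qed.

Lemma small_zero (r : R) : (forall eps, eps > 0 -> Rabs r < eps) -> r = 0.
Proof.
  intro H. destruct (Req_dec r 0); auto.
  assert (Rabs r > 0) by (apply Rabs_pos_lt; auto).
  specialize (H (Rabs r / 2) ltac:(lra)). lra.
Qed.

Lemma choice_fun {A B : Type} (P : A -> B -> Prop) :
  (forall a, exists b, P a b) -> exists f, forall a, P a (f a).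
Proof.
  intro H. exists (fun a => proj1_sig (constructive_indefinite_description _ (H a))).
  intro a. exact (proj2_sig (constructive_indefinite_description _ (H a))).
Qed.

Section Conv.
Context {X : HilbertSpace}.
Implicit Types x y z l m : X.

Lemma conv_unique (u : nat -> X) l m : converges_to u l -> converges_to u m -> l = m.
Proof.
  intros Hl Hm. apply vsub_eq0, norm_zero. apply small_zero. intros eps Heps.
  destruct (Hl (eps/2) ltac:(lra)) as [N1 H1]. destruct (Hm (eps/2) ltac:(lra)) as [N2 H2].
  specialize (H1 (max N1 N2) ltac:(lia)). specialize (H2 (max N1 N2) ltac:(lia)).
  rewrite Rabs_pos_eq by apply norm_ge0.
  pose proof (norm_tri l (u (max N1 N2)) m). rewrite (norm_sub_sym l (u _)) in H. lra.
Qed.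

Lemma conv_add (u v : nat -> X) l m : converges_to u l -> converges_to v m ->
  converges_to (fun n => vadd (u n) (v n)) (vadd l m).
Proof.
  intros Hl Hm eps Heps.
  destruct (Hl (eps/2) ltac:(lra)) as [N1 H1]. destruct (Hm (eps/2) ltac:(lra)) as [N2 H2].
  exists (max N1 N2). intros n Hn. rewrite vadd_sub4.
  specialize (H1 n ltac:(lia)). specialize (H2 n ltac:(lia)).
  pose proof (norm_add (vsub (u n) l) (vsub (v n) m)). lra.
Qed.

Lemma conv_scal (u : nat -> X) l (a : Cx) : converges_to u l ->
  converges_to (fun n => vscal a (u n)) (vscal a l).
Proof.
  intros Hl eps Heps. set (K := sqrt (re a * re a + im a * im a)).
  assert (HK : 0 <= K) by apply sqrt_pos.
  destruct (Hl (eps / (K + 1)) ltac:(apply Rdiv_lt_0_compat; lra)) as [N H1].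
  exists N. intros n Hn. rewrite <- vscal_sub, norm_scal. fold K.
  specialize (H1 n Hn).
  assert (K * norm (vsub (u n) l) <= K * (eps / (K+1))) by (apply Rmult_le_compat_l; lra).
  assert (K * (eps / (K + 1)) < eps).
  { apply (Rmult_lt_reg_r (K+1)); [lra|]. field_simplify; [|lra]. nra. }
  lra.
Qed.

Lemma conv_sub (u v : nat -> X) l m : converges_to u l -> converges_to v m ->
  converges_to (fun n => vsub (u n) (v n)) (vsub l m).
Proof.
  intros Hl Hm. unfold vsub at 2. rewrite <- vscal_m1.
  assert (converges_to (fun n => vadd (u n) (vscal (mkC (-1) 0) (v n))) (vadd l (vscal (mkC (-1) 0) m))).
  { apply conv_add; auto. apply conv_scal; auto. }
  intros eps Heps. destruct (H eps Heps) as [N HN]. exists N. intros n Hn.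
  specialize (HN n Hn). simpl in HN. unfold vsub at 2. rewrite <- vscal_m1. exact HN.
Qed.

Lemma conv_const l : converges_to (fun _ => l) l.
Proof. intros eps Heps. exists O. intros. rewrite vsub_self, norm_0. lra. Qed.

Lemma phi_ge (phi : nat -> nat) : (forall n, (phi n < phi (S n))%nat) -> forall n, (n <= phi n)%nat.
Proof. intros H n. induction n. lia. specialize (H n). lia. Qed.

Lemma conv_subseq (u : nat -> X) l phi : (forall n, (phi n < phi (S n))%nat) ->
  converges_to u l -> converges_to (fun n => u (phi n)) l.
Proof.
  intros Hp Hl eps Heps. destruct (Hl eps Heps) as [N HN]. exists N. intros n Hn.
  apply HN. pose proof (phi_ge phi Hp n). lia.
Qed.

Lemma conv_cauchy (u : nat -> X) l : converges_to u l -> cauchy u.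
Proof.
  intros Hl eps Heps. destruct (Hl (eps/2) ltac:(lra)) as [N HN]. exists N.
  intros m n Hm Hn. pose proof (norm_tri (u m) l (u n)).
  specialize (HN m Hm) as H1. specialize (HN n Hn) as H2. rewrite (norm_sub_sym l) in H. lra.
Qed.

Lemma inner_lim (u v : nat -> X) l m z w : converges_to u l -> converges_to v m ->
  (forall n, inner (u n) z = inner (v n) w) -> inner l z = inner m w.
Proof.
  intros Hl Hm Heq.
  assert (Hgen : forall (f : Cx -> R), (forall x y, Rabs (f (inner x y)) <= norm x * norm y) ->
     (forall p q, f (Cadd p (Copp q)) = f p - f q) ->
     f (inner l z) = f (inner m w)).
  { intros f Hf Hlin. apply Rminus_diag_uniq. apply small_zero. intros eps Heps.
    set (K := norm z + norm w + 1).
    assert (HK : 0 < K) by (unfold K; pose proof (norm_ge0 z); pose proof (norm_ge0 w); lra).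
    destruct (Hl (eps / K) ltac:(apply Rdiv_lt_0_compat; lra)) as [N1 H1].
    destruct (Hm (eps / K) ltac:(apply Rdiv_lt_0_compat; lra)) as [N2 H2].
    set (n := max N1 N2). specialize (H1 n ltac:(lia)). specialize (H2 n ltac:(lia)).
    assert (E1 : f (inner (vsub l (u n)) z) = f (inner l z) - f (inner (u n) z)) by (rewrite inner_subl; apply Hlin).
    assert (E2 : f (inner (vsub m (v n)) w) = f (inner m w) - f (inner (v n) w)) by (rewrite inner_subl; apply Hlin).
    rewrite Heq in E1.
    pose proof (Hf (vsub l (u n)) z). pose proof (Hf (vsub m (v n)) w).
    rewrite norm_sub_sym in H, H0.
    pose proof (norm_ge0 z). pose proof (norm_ge0 w).
    assert (norm (vsub (u n) l) * norm z <= eps / K * norm z) by (apply Rmult_le_compat_r; lra).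
    assert (norm (vsub (v n) m) * norm w <= eps / K * norm w) by (apply Rmult_le_compat_r; lra).
    assert (eps / K * norm z + eps / K * norm w < eps).
    { apply (Rmult_lt_reg_r K); [lra|]. field_simplify; [|lra]. unfold K. nra. }
    replace (f (inner l z) - f (inner m w)) with
      (f (inner (vsub l (u n)) z) - f (inner (vsub m (v n)) w)) by lra.
    pose proof (Rabs_triang (f (inner (vsub l (u n)) z)) (- f (inner (vsub m (v n)) w))) as HT.
    rewrite Rabs_Ropp in HT. unfold Rminus. lra. }
  apply Cx_ext.
  - apply (Hgen re). apply CS_re. intros; simpl; ring.
  - apply (Hgen im). apply CS_im. intros; simpl; ring.
Qed.

Lemma inner_lim0 (u : nat -> X) l z : converges_to u l ->
  (forall n, inner (u n) z = C0) -> inner l z = C0.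
Proof.
  intros Hl H. rewrite <- (inner_0l z).
  apply (inner_lim u (fun _ => vzero) l vzero z z Hl (conv_const _)).
  intro n. rewrite H, inner_0l. reflexivity.
Qed.
End Conv.

Lemma inv_small (d : R) : d > 0 -> exists N, forall n, (N <= n)%nat -> / (INR n + 1) < d.
Proof.
  intro Hd. destruct (archimed_cor1 d Hd) as [N [HN HN0]]. exists N. intros n Hn.
  apply le_INR in Hn. apply lt_INR in HN0. simpl in HN0.
  assert (/ (INR n + 1) < / INR N) by (apply Rinv_0_lt_contravar; lra). lra.
Qed.

Lemma inv_le (p q : nat) : (p <= q)%nat -> / (INR q + 1) <= / (INR p + 1).
Proof.
  intro H. apply le_INR in H. pose proof (pos_INR p).
  apply Rinv_le_contravar; lra.
Qed.

Definition csub {X : HilbertSpace} (M : X -> Prop) : Prop :=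
  M vzero /\ (forall a b, M a -> M b -> M (vadd a b)) /\ (forall c a, M a -> M (vscal c a)) /\
  (forall u l, (forall n, M (u n)) -> converges_to u l -> M l).

Section Proj.
Context {X : HilbertSpace}.

Lemma csub_sub (M : X -> Prop) a b : csub M -> M a -> M b -> M (vsub a b).
Proof.
  intros [H0 [Ha [Hs Hc]]] HA HB. unfold vsub. rewrite <- vscal_m1. auto.
Qed.

Lemma orth_min (w z : X) : (forall t, nsq w <= nsq (vsub w (vscal (rc t) z))) -> re (inner w z) = 0.
Proof.
  intro H. set (a := nsq z). set (b := re (inner w z)).
  assert (Ht : forall t, 0 <= t * t * a - 2 * t * b).
  { intro t. specialize (H t). rewrite nsq_sub, nsq_scal, inner_scalr in H. simpl in H.
    unfold a, b. lra. }
  destruct (Req_dec a 0) as [Ha|Ha].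
  - apply nsq_zero in Ha. unfold b. rewrite Ha, inner_0r. reflexivity.
  - assert (0 < a) by (pose proof (nsq_ge0 z); unfold a in *; lra).
    specialize (Ht (b / a)).
    assert (a * (b / a * (b / a) * a - 2 * (b / a) * b) = - (b * b)) by (field; exact Ha).
    assert (0 <= a * (b / a * (b / a) * a - 2 * (b / a) * b)) by (apply Rmult_le_pos; lra).
    nra.
Qed.

Lemma norm_lt_sq (x : X) eps : eps > 0 -> nsq x < eps * eps -> norm x < eps.
Proof.
  intros He H. destruct (Rlt_or_le (norm x) eps); auto.
  pose proof (norm_sq x). assert (eps * eps <= norm x * norm x) by nra. lra.
Qed.

Lemma norm_le_1nsq (x : X) : norm x <= 1 + nsq x.
Proof. rewrite <- norm_sq. pose proof (norm_ge0 x). nra. Qed.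

Lemma proj_exists (M : X -> Prop) : csub M -> forall x, exists y, M y /\ perp M (vsub x y).
Proof.
  intros HM x. pose proof HM as [H0 [Hadd [Hscal Hcl]]].
  set (D := fun m => nsq (vsub x m)).
  set (E := fun r => exists m, M m /\ r = - D m).
  assert (Hb : bound E).
  { exists 0. intros r [m [_ ->]]. unfold D. pose proof (nsq_ge0 (vsub x m)). lra. }
  destruct (completeness E Hb (ex_intro _ (- D vzero) (ex_intro _ vzero (conj H0 eq_refl))))
    as [s [Hub Hlub]].
  set (d2 := - s).
  assert (P1 : forall m, M m -> d2 <= D m).
  { intros m Hm. assert (E (- D m)) by (exists m; auto). specialize (Hub _ H). unfold d2. lra. }
  assert (P2 : forall eps, eps > 0 -> exists m, M m /\ D m < d2 + eps).
  { intros eps Heps. destruct (classic (exists m, M m /\ D m < d2 + eps)) as [|Hn]; auto.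
    exfalso. assert (is_upper_bound E (s - eps)).
    { intros r [m [Hm ->]]. destruct (Rlt_or_le (D m) (d2 + eps)).
      - exfalso. apply Hn. exists m; auto.
      - unfold d2 in *. lra. }
    specialize (Hlub _ H). lra. }
  destruct (choice_fun (fun n m => M m /\ D m < d2 + / (INR n + 1))) as [mq Hmq].
  { intro n. apply P2. pose proof (pos_INR n). apply Rlt_gt, Rinv_0_lt_compat. lra. }
  assert (Hpar : forall p q, nsq (vsub (mq q) (mq p)) <= 2 * / (INR p + 1) + 2 * / (INR q + 1)).
  { intros p q. destruct (Hmq p) as [Mp Dp]. destruct (Hmq q) as [Mq Dq].
    set (a := vsub x (mq p)). set (b := vsub x (mq q)).
    set (c := vscal (rc (1/2)) (vadd (mq p) (mq q))).
    assert (Mc : M c) by (unfold c; auto).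
    assert (E1 : vsub a b = vsub (mq q) (mq p)).
    { unfold a, b. rewrite vsub_sub4, vsub_self, vsub_0l, vopp_sub. reflexivity. }
    assert (E2 : vadd a b = vscal (rc 2) (vsub x c)).
    { unfold a, b, c. rewrite vscal_sub, vscal_mul.
      replace (Cmul (rc 2) (rc (1/2))) with Defs.C1 by (apply Cx_ext; simpl; field).
      rewrite vscal_one.
      replace (rc 2) with (Cadd Defs.C1 Defs.C1) by (apply Cx_ext; simpl; ring).
      rewrite vscal_adds, vscal_one. rewrite vadd_sub4. reflexivity. }
    pose proof (nsq_add a b) as HA. pose proof (nsq_sub a b) as HB.
    rewrite E1 in HB. rewrite E2, nsq_scal in HA. simpl in HA.
    specialize (P1 c Mc). unfold D in P1, Dp, Dq. fold a in Dp. fold b in Dq.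
    lra. }
  assert (Hc : cauchy mq).
  { intros eps Heps. destruct (inv_small (eps * eps / 4)) as [N HN].
    { apply Rlt_gt. apply Rdiv_lt_0_compat; nra. }
    exists N. intros m n Hm Hn. apply norm_lt_sq; auto.
    pose proof (Hpar n m). pose proof (HN m Hm). pose proof (HN n Hn). lra. }
  destruct (complete' mq Hc) as [y Hy].
  assert (My : M y) by (apply (Hcl mq y); [intro n; apply (Hmq n)|exact Hy]).
  exists y. split; auto.
  assert (HDy : D y <= d2).
  { apply Rnot_lt_le. intro Hlt. set (del := D y - d2).
    assert (Hdel : del > 0) by (unfold del; lra).
    set (B := d2 + 2).
    assert (HB0 : 0 <= d2).
    { assert (Hu0 : is_upper_bound E 0).
      { intros r [m [_ ->]]. unfold D. pose proof (nsq_ge0 (vsub x m)). lra. }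
      specialize (Hlub 0 Hu0). unfold d2. lra. }
    set (rho := Rmin 1 (del / (3 * (2 * B + 1)))).
    assert (Hrho : rho > 0).
    { unfold rho. apply Rmin_glb_lt. lra. apply Rdiv_lt_0_compat; unfold B; lra. }
    destruct (inv_small (Rmin 1 (del / 3))) as [N1 HN1].
    { apply Rmin_glb_lt; lra. }
    destruct (Hy rho Hrho) as [N2 HN2].
    set (n := max N1 N2). specialize (HN1 n ltac:(lia)). specialize (HN2 n ltac:(lia)).
    destruct (Hmq n) as [_ Dn].
    pose proof (Rmin_l 1 (del/3)) as Hm1. pose proof (Rmin_r 1 (del/3)) as Hm2.
    pose proof (Rmin_l 1 (del / (3 * (2 * B + 1)))) as Hm3. pose proof (Rmin_r 1 (del / (3 * (2 * B + 1)))) as Hm4.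
    fold rho in Hm3, Hm4.
    set (r := norm (vsub (mq n) y)). fold r in HN2.
    assert (Hr0 : 0 <= r) by apply norm_ge0.
    assert (Hnx : norm (vsub x (mq n)) <= B).
    { pose proof (norm_le_1nsq (vsub x (mq n))). unfold D in Dn. unfold B. lra. }
    pose proof (CS_re (vsub x (mq n)) (vsub (mq n) y)) as HCS.
    pose proof (Rle_abs (re (inner (vsub x (mq n)) (vsub (mq n) y)))).
    assert (Dy : D y = D (mq n) + r * r + 2 * re (inner (vsub x (mq n)) (vsub (mq n) y))).
    { unfold D. rewrite (vsub_chain x (mq n) y), nsq_add. unfold r. rewrite norm_sq. reflexivity. }
    fold r in HCS.
    assert (norm (vsub x (mq n)) * r <= B * r) by (apply Rmult_le_compat_r; lra).
    assert ((2 * B + 1) * r <= del / 3).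
    { assert (Hr1 : r <= del / (3 * (2 * B + 1))) by lra.
      assert (0 < 2 * B + 1) by (unfold B; lra).
      apply (Rmult_le_compat_l (2*B+1)) in Hr1; [|lra].
      replace ((2 * B + 1) * (del / (3 * (2 * B + 1)))) with (del/3) in Hr1 by (field; lra). lra. }
    assert (r * r <= r) by nra.
    unfold del in *. lra. }
  intros z Mz. set (w := vsub x y).
  assert (Hmin : forall z', M z' -> forall t, nsq w <= nsq (vsub w (vscal (rc t) z'))).
  { intros z' Mz' t. replace (vsub w (vscal (rc t) z')) with (vsub x (vadd y (vscal (rc t) z'))).
    - specialize (P1 _ (Hadd _ _ My (Hscal (rc t) _ Mz'))). unfold D in P1. unfold w. fold (D y). lra.
    - unfold w, vsub. rewrite vopp_add, vadd_assoc. reflexivity. }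
  pose proof (orth_min w z (Hmin z Mz)) as Hre.
  pose proof (orth_min w (vscal ci z) (Hmin _ (Hscal _ _ Mz))) as Him.
  rewrite re_i in Him. apply Cx_ext; simpl; assumption.
Qed.
End Proj.

Section Perp.
Context {X : HilbertSpace}.

Lemma perp_csub (M : X -> Prop) : csub (perp M).
Proof.
  split; [|split; [|split]].
  - intros z _. apply inner_0l.
  - intros a b Ha Hb z Hz. rewrite inner_addl, Ha, Hb by auto. apply Cx_ext; simpl; lra.
  - intros c a Ha z Hz. rewrite inner_scall, Ha by auto. apply Cx_ext; simpl; lra.
  - intros u l Hu Hl z Hz. apply (inner_lim0 u l z Hl). intro n. apply Hu, Hz.
Qed.

Lemma perpperp (M : X -> Prop) v : csub M -> perp (perp M) v -> M v.
Proof.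
  intros HM Hv. destruct (proj_exists M HM v) as [y [My Hr]].
  set (r := vsub v y) in *.
  assert (E1 : inner v r = C0).
  { exact (Hv r Hr). }
  assert (E2 : inner y r = C0).
  { rewrite (inner_conj _ r y). rewrite (Hr y My). apply Cx_ext; simpl; lra. }
  assert (r = vzero).
  { apply nsq_zero. unfold nsq, r at 1. rewrite inner_subl. fold r. rewrite E1, E2. simpl. lra. }
  apply vsub_eq0 in H. rewrite H. exact My.
Qed.

Lemma proj_sub (M : X -> Prop) a b qa qb : csub M -> orth_proj M a qa -> orth_proj M b qb ->
  orth_proj M (vsub a b) (vsub qa qb).
Proof.
  intros HM [Ha Pa] [Hb Pb]. split.
  - apply csub_sub; auto.
  - rewrite vsub_sub4. apply csub_sub; auto. apply perp_csub.
Qed.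

Lemma proj_unique (M : X -> Prop) v q1 q2 : csub M -> orth_proj M v q1 -> orth_proj M v q2 -> q1 = q2.
Proof.
  intros HM H1 H2. destruct (proj_sub M v v q1 q2 HM H1 H2) as [Hd Pd].
  rewrite vsub_self in Pd. apply vsub_eq0, nsq_zero.
  pose proof (Pd _ Hd). rewrite vsub_0l, inner_oppl in H. apply (f_equal re) in H. simpl in H.
  unfold nsq. lra.
Qed.

Lemma proj_scal (M : X -> Prop) v q c : csub M -> orth_proj M v q -> orth_proj M (vscal c v) (vscal c q).
Proof.
  intros HM [Hq Pq]. pose proof HM as [_ [_ [Hs _]]]. split; auto.
  rewrite <- vscal_sub. pose proof (perp_csub M) as [_ [_ [Hs' _]]]. auto.
Qed.

Lemma proj_norm (M : X -> Prop) v q : orth_proj M v q -> norm q <= norm v.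
Proof.
  intros [Hq Pq]. unfold norm. apply sqrt_le_1_alt. fold (nsq q) (nsq v).
  rewrite <- (vadd_sub_cancel v q). rewrite nsq_add, re_inner_sym, (Pq q Hq).
  simpl. pose proof (nsq_ge0 (vsub v q)). lra.
Qed.

Lemma rel_sub (T : X -> X -> Prop) x f y g : is_subspace T -> T x f -> T y g -> T (vsub x y) (vsub f g).
Proof.
  intros [_ [Ha Hs]] H1 H2. unfold vsub. rewrite <- !vscal_m1. auto.
Qed.

Lemma rel_zero_csub (T : X -> X -> Prop) : is_subspace T -> is_closed T -> csub (fun f => T vzero f).
Proof.
  intros HT Hc. pose proof HT as [H0 [Ha Hs]]. split; [|split; [|split]].
  - exact H0.
  - intros a b H1 H2. rewrite <- (vadd_zero _ vzero). auto.
  - intros c a H1. rewrite <- (vscal_v0 c). auto.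
  - intros u l Hu Hl. apply (Hc (fun _ => vzero) u vzero l Hu (conv_const _) Hl).
Qed.

Lemma op_unique (T : X -> X -> Prop) x f1 f2 : is_subspace T ->
  op_part T x f1 -> op_part T x f2 -> f1 = f2.
Proof.
  intros HT [H1 O1] [H2 O2]. pose proof (rel_sub T _ _ _ _ HT H1 H2) as Hd. rewrite vsub_self in Hd.
  assert (Ti : T_infty T vzero (vsub f1 f2)) by (split; auto).
  specialize (O1 _ _ Ti). specialize (O2 _ _ Ti). rewrite inner_0r in O1, O2.
  apply vsub_eq0, nsq_zero. unfold nsq. rewrite inner_subl.
  apply (f_equal re) in O1. apply (f_equal re) in O2. simpl in *. lra.
Qed.

Lemma op_sub (T : X -> X -> Prop) x f y g : is_subspace T ->
  op_part T x f -> op_part T y g -> op_part T (vsub x y) (vsub f g).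
Proof.
  intros HT [H1 O1] [H2 O2]. split. apply rel_sub; auto.
  intros y' g' Ti. specialize (O1 _ _ Ti). specialize (O2 _ _ Ti).
  rewrite inner_subl, inner_subl.
  apply Cx_ext; [apply (f_equal re) in O1; apply (f_equal re) in O2 | apply (f_equal im) in O1; apply (f_equal im) in O2];
   simpl in *; lra.
Qed.

Lemma op_scal (T : X -> X -> Prop) x f c : is_subspace T ->
  op_part T x f -> op_part T (vscal c x) (vscal c f).
Proof.
  intros HT [H1 O1]. pose proof HT as [_ [_ Hs]]. split. auto.
  intros y' g' Ti. specialize (O1 _ _ Ti). rewrite !inner_scall.
  pose proof (f_equal re O1) as Hre. pose proof (f_equal im O1) as Him. simpl in Hre, Him.
  apply Cx_ext; simpl.
  - transitivity (re c * (re (inner x y') + re (inner f g')) - im c * (im (inner x y') + im (inner f g'))).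
    ring. rewrite Hre, Him. ring.
  - transitivity (re c * (im (inner x y') + im (inner f g')) + im c * (re (inner x y') + re (inner f g'))).
    ring. rewrite Hre, Him. ring.
Qed.
End Perp.

Lemma pow_half (n : nat) : (/2) ^ n <= / (INR n + 1).
Proof.
  assert (H : INR n + 1 <= 2 ^ n).
  { induction n. simpl. lra. rewrite S_INR. simpl. pose proof (pos_INR n). lra. }
  rewrite pow_inv. apply Rinv_le_contravar; [pose proof (pos_INR n); lra | exact H].
Qed.

Lemma banach {X : HilbertSpace} (F : X -> X) :
  (forall a b, norm (vsub (F a) (F b)) <= /2 * norm (vsub a b)) -> exists u, F u = u.
Proof.
  intro HF. set (u := fun n => Nat.iter n F vzero).
  set (d0 := norm (vsub (u 1%nat) (u 0%nat))).
  assert (Hd0 : 0 <= d0) by apply norm_ge0.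
  assert (Step : forall n, norm (vsub (u (S n)) (u n)) <= (/2) ^ n * d0).
  { induction n. simpl. unfold d0. simpl. lra.
    change (u (S (S n))) with (F (u (S n))). change (u (S n)) with (F (u n)) at 2.
    eapply Rle_trans. apply HF. change (u (S n)) with (F (u n)) in IHn. simpl. lra. }
  assert (Acc : forall k n, norm (vsub (u (n + k)%nat) (u n)) <= 2 * d0 * ((/2) ^ n - (/2) ^ (n + k))).
  { induction k; intro n.
    - rewrite Nat.add_0_r, vsub_self, norm_0. lra.
    - pose proof (norm_tri (u (n + S k)%nat) (u (n + k)%nat) (u n)).
      replace (n + S k)%nat with (S (n + k)) in * by lia.
      specialize (Step (n + k)%nat). specialize (IHk n).
      simpl ((/2) ^ S (n + k)). lra. }
  assert (Bnd : forall m n, (n <= m)%nat -> norm (vsub (u m) (u n)) <= 2 * d0 * / (INR n + 1)).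
  { intros m n Hnm. replace m with (n + (m - n))%nat by lia.
    pose proof (Acc (m - n)%nat n). pose proof (pow_le (/2) (n + (m - n))%nat ltac:(lra)).
    pose proof (pow_half n). nra. }
  assert (Hc : cauchy u).
  { intros eps Heps. destruct (inv_small (eps / (2 * d0 + 1))) as [N HN].
    { apply Rlt_gt, Rdiv_lt_0_compat; lra. }
    exists N. intros m n Hm Hn.
    assert (forall p q, (N <= q)%nat -> (q <= p)%nat -> norm (vsub (u p) (u q)) < eps).
    { intros p q Hq Hqp. specialize (Bnd p q Hqp). specialize (HN q Hq).
      pose proof (Rinv_0_lt_compat (INR q + 1) ltac:(pose proof (pos_INR q); lra)).
      assert (2 * d0 * / (INR q + 1) <= (2 * d0 + 1) * / (INR q + 1)) by nra.
      assert ((2 * d0 + 1) * / (INR q + 1) < (2 * d0 + 1) * (eps / (2 * d0 + 1))) by (apply Rmult_lt_compat_l; lra).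
      replace ((2 * d0 + 1) * (eps / (2 * d0 + 1))) with eps in H1 by (field; lra). lra. }
    destruct (Nat.le_ge_cases n m).
    - apply H; auto.
    - rewrite norm_sub_sym. apply H; auto. }
  destruct (complete' u Hc) as [l Hl]. exists l.
  apply vsub_eq0, norm_zero. apply small_zero. intros eps Heps. rewrite Rabs_pos_eq by apply norm_ge0.
  destruct (Hl (eps / 2) ltac:(lra)) as [N HN].
  pose proof (HN N (le_n N)). pose proof (HN (S N) ltac:(lia)).
  pose proof (norm_tri (F l) (u (S N)) l).
  change (vsub (F l) (u (S N))) with (vsub (F l) (F (u N))) in H1.
  pose proof (HF l (u N)). rewrite (norm_sub_sym l (u N)) in H2. lra.
Qed.

Definition lam (s : R) : Cx := mkC 0 s.

Section Main.
Context {X : HilbertSpace} (S A : X -> X -> Prop).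
Hypothesis HSs : is_subspace S.
Hypothesis HSsa : self_adjoint S.
Hypothesis HAs : is_subspace A.
Hypothesis HAc : is_closed A.
Hypothesis HAh : hermitian A.
Hypothesis HDom : forall x, dom S x -> dom A x.

Definition S0 : X -> Prop := fun f => S vzero f.
Definition P : X -> Prop := perp (img_at S vzero).
Definition A0 : X -> Prop := fun f => A vzero f.

Lemma S_herm x f y g : S x f -> S y g -> inner f y = inner x g.
Proof. intros H1 H2. apply (proj1 (HSsa x f) H1). exact H2. Qed.

Lemma S_closed : is_closed S.
Proof.
  intros xs fs y g Hn Hx Hf. apply HSsa. intros z h Hzh.
  apply (inner_lim fs xs g y z h Hf Hx). intro n. apply S_herm; auto.
Qed.

Lemma P_csub : csub P.
Proof. apply perp_csub. Qed.

Lemma dom_P x f : S x f -> P x.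
Proof.
  intros H g Hg. unfold img_at in Hg. pose proof (S_herm x f vzero g H Hg).
  rewrite <- H0, inner_0r. reflexivity.
Qed.

Lemma perpD_S0 w : (forall x f, S x f -> inner w x = C0) -> S vzero w.
Proof.
  intro H. apply HSsa. intros x f Hxf. rewrite H with (f := f), inner_0l; auto.
Qed.

Lemma Q_ex v : exists q, orth_proj P v q.
Proof. destruct (proj_exists P P_csub v) as [q [H1 H2]]. exists q. split; auto. Qed.

Lemma Q_S0 v q : orth_proj P v q -> S vzero (vsub v q).
Proof.
  intros [_ Hq]. apply perpD_S0. intros x f Hxf. apply Hq. eapply dom_P; eauto.
Qed.

Lemma Q_inner v q z : orth_proj P v q -> P z -> inner q z = inner v z.
Proof.
  intros [_ Hq] Hz. pose proof (Hq z Hz). rewrite inner_subl in H.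
  apply Cx_ext; [apply (f_equal re) in H | apply (f_equal im) in H]; simpl in H; lra.
Qed.

Lemma opS_ex x f : S x f -> exists v, op_part S x v /\ norm v <= norm f.
Proof.
  intro H. destruct (Q_ex f) as [q Hq]. exists q. split.
  - split.
    + pose proof (rel_sub S _ _ _ _ HSs H (Q_S0 f q Hq)) as H1.
      rewrite vsub_0r, vsub_sub_cancel in H1. exact H1.
    + intros y g [-> Hg]. rewrite inner_0r. destruct Hq as [Pq _].
      rewrite (Pq g Hg). apply Cx_ext; simpl; lra.
  - eapply proj_norm; eauto.
Qed.

Lemma opA_ex x g : A x g -> exists g', op_part A x g'.
Proof.
  intro H. pose proof (rel_zero_csub A HAs HAc) as HA0.
  destruct (proj_exists (perp A0) (perp_csub _) g) as [q [Pq Hr]].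
  assert (A vzero (vsub g q)) by (apply (perpperp A0); auto).
  exists q. split.
  - pose proof (rel_sub A _ _ _ _ HAs H H0) as H1. rewrite vsub_0r, vsub_sub_cancel in H1. exact H1.
  - intros y g' [-> Hg']. rewrite inner_0r, (Pq g' Hg'). apply Cx_ext; simpl; lra.
Qed.

Lemma S_ident s x f : S x f -> nsq (vsub f (vscal (lam s) x)) = nsq f + s * s * nsq x.
Proof.
  intro H. rewrite nsq_sub, nsq_scal, inner_scalr. simpl.
  pose proof (S_herm x f x f H H) as E. pose proof (f_equal im E) as Ei.
  rewrite (im_inner_sym f x) in Ei. ring_simplify. replace (im (inner f x)) with 0 by lra. ring.
Qed.

Lemma nsq_le0 (x : X) : nsq x <= 0 -> x = vzero.
Proof. intro H. apply nsq_zero. pose proof (nsq_ge0 x). lra. Qed.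

Lemma res_unique s u x1 x2 : s <> 0 -> S x1 (vadd u (vscal (lam s) x1)) -> S x2 (vadd u (vscal (lam s) x2)) -> x1 = x2.
Proof.
  intros Hs H1 H2. pose proof (rel_sub S _ _ _ _ HSs H1 H2) as H.
  pose proof (S_ident s _ _ H) as E.
  rewrite vadd_sub4, vsub_self, vadd_0l, <- vscal_sub, vsub_self, nsq_0 in E.
  apply vsub_eq0, nsq_le0. pose proof (nsq_ge0 (vscal (lam s) (vsub x1 x2))).
  assert (0 < s * s) by nra. nra.
Qed.

Lemma range_S s : s <> 0 -> forall u, exists x, S x (vadd u (vscal (lam s) x)).
Proof.
  intros Hs u.
  set (M := fun u => exists x f, S x f /\ u = vsub f (vscal (lam s) x)).
  assert (HM : csub M).
  { pose proof HSs as [S0' [Sa Ssc]]. split; [|split; [|split]].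
    - exists vzero, vzero. split; auto. rewrite vscal_v0, vsub_self. reflexivity.
    - intros a b [x1 [f1 [H1 ->]]] [x2 [f2 [H2 ->]]]. exists (vadd x1 x2), (vadd f1 f2). split; auto.
      rewrite vscal_addv, vadd_sub4. reflexivity.
    - intros c a [x1 [f1 [H1 ->]]]. exists (vscal c x1), (vscal c f1). split; auto.
      rewrite vscal_sub, !vscal_mul. f_equal. f_equal. apply Cx_ext; simpl; ring.
    - intros us l Hu Hl.
      destruct (choice_fun (fun n (p : X * X) => S (fst p) (snd p) /\ us n = vsub (snd p) (vscal (lam s) (fst p)))) as [F HF].
      { intro n. destruct (Hu n) as [x [f [H1 H2]]]. exists (x, f). auto. }
      assert (Hdiff : forall m n, nsq (vsub (us m) (us n)) = nsq (vsub (snd (F m)) (snd (F n))) + s * s * nsq (vsub (fst (F m)) (fst (F n)))).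
      { intros m n. destruct (HF m) as [Hm Em]. destruct (HF n) as [Hn En].
        rewrite Em, En, vsub_sub4, <- vscal_sub. apply S_ident. apply rel_sub; auto. }
      pose proof (conv_cauchy us l Hl) as Hc.
      assert (Cx : cauchy (fun n => fst (F n))).
      { intros eps Heps. destruct (Hc (Rabs s * eps)) as [N HN].
        { apply Rlt_gt, Rmult_lt_0_compat; [apply Rabs_pos_lt|]; lra. }
        exists N. intros m n Hm Hn. specialize (HN m n Hm Hn).
        apply norm_lt_sq; auto. pose proof (Hdiff m n).
        pose proof (nsq_ge0 (vsub (snd (F m)) (snd (F n)))).
        assert (nsq (vsub (us m) (us n)) < Rabs s * eps * (Rabs s * eps)).
        { rewrite <- norm_sq. pose proof (norm_ge0 (vsub (us m) (us n))). nra. }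
        assert (Hss : s * s = Rabs s * Rabs s) by (rewrite <- Rabs_mult, Rabs_pos_eq; nra).
        assert (Hs0 : 0 < Rabs s) by (apply Rabs_pos_lt; auto).
        rewrite Hss in H.
        assert (Hlt : Rabs s * Rabs s * nsq (vsub (fst (F m)) (fst (F n))) < Rabs s * Rabs s * (eps * eps)) by lra.
        apply Rmult_lt_reg_l in Hlt; nra. }
      assert (Cf : cauchy (fun n => snd (F n))).
      { intros eps Heps. destruct (Hc eps Heps) as [N HN].
        exists N. intros m n Hm Hn. specialize (HN m n Hm Hn).
        apply norm_lt_sq; auto. pose proof (Hdiff m n).
        pose proof (nsq_ge0 (vsub (fst (F m)) (fst (F n)))).
        assert (nsq (vsub (us m) (us n)) < eps * eps).
        { rewrite <- norm_sq. pose proof (norm_ge0 (vsub (us m) (us n))). nra. }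
        assert (0 <= s * s) by nra. nra. }
      destruct (complete' _ Cx) as [x Hx]. destruct (complete' _ Cf) as [f Hf].
      exists x, f. split.
      + apply (S_closed _ _ x f (fun n => proj1 (HF n)) Hx Hf).
      + apply (conv_unique us).
        * exact Hl.
        * assert (Hcv := conv_sub _ _ _ _ Hf (conv_scal _ _ (lam s) Hx)).
          intros eps Heps. destruct (Hcv eps Heps) as [N HN]. exists N. intros n Hn.
          rewrite (proj2 (HF n)). apply HN; auto. }
  destruct (proj_exists M HM u) as [y [[x [f [Hxf ->]]] Hw]].
  set (w := vsub u (vsub f (vscal (lam s) x))) in *.
  assert (Sw : S w (vscal (lam (- s)) w)).
  { apply HSsa. intros z h Hzh.
    assert (Mz : M (vsub h (vscal (lam s) z))) by (exists z, h; auto).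
    specialize (Hw _ Mz). rewrite inner_subr, inner_scalr in Hw. rewrite inner_scall.
    apply Cx_ext; [apply (f_equal re) in Hw | apply (f_equal im) in Hw]; simpl in *; lra. }
  pose proof (S_ident (- s) _ _ Sw) as E. rewrite vsub_self, nsq_0 in E.
  assert (w = vzero).
  { apply nsq_le0. pose proof (nsq_ge0 (vscal (lam (- s)) w)). assert (0 < s * s) by nra. nra. }
  apply vsub_eq0 in H. exists x. rewrite H, vadd_comm, vadd_sub_cancel. exact Hxf.
Qed.
Definition Kr (s : R) (u k : X) : Prop :=
  exists x g, S x (vadd u (vscal (lam s) x)) /\ op_part A x g /\ orth_proj P g k.

Lemma Kr_total s u : s <> 0 -> exists k, Kr s u k.
Proof.
  intro Hs. destruct (range_S s Hs u) as [x Hx].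
  destruct (HDom x (ex_intro _ _ Hx)) as [g0 Hg0].
  destruct (opA_ex x g0 Hg0) as [g Hg].
  destruct (Q_ex g) as [k Hk]. exists k, x, g. auto.
Qed.

Lemma Kr_fun s u k1 k2 : s <> 0 -> Kr s u k1 -> Kr s u k2 -> k1 = k2.
Proof.
  intros Hs [x1 [g1 [H1 [G1 K1]]]] [x2 [g2 [H2 [G2 K2]]]].
  assert (x1 = x2) by (apply (res_unique s u); auto). subst x2.
  assert (g1 = g2) by (apply (op_unique A x1); auto). subst g2.
  apply (proj_unique P g1); auto. apply P_csub.
Qed.

Lemma Kr_sub s a b ka kb : Kr s a ka -> Kr s b kb -> Kr s (vsub a b) (vsub ka kb).
Proof.
  intros [x1 [g1 [H1 [G1 K1]]]] [x2 [g2 [H2 [G2 K2]]]].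
  exists (vsub x1 x2), (vsub g1 g2). split; [|split].
  - pose proof (rel_sub S _ _ _ _ HSs H1 H2) as H. rewrite vadd_sub4, <- vscal_sub in H. exact H.
  - apply op_sub; auto.
  - apply proj_sub; auto. apply P_csub.
Qed.

Lemma Kr_scal s u k c : Kr s u k -> Kr s (vscal c u) (vscal c k).
Proof.
  intros [x [g [H [G K]]]]. exists (vscal c x), (vscal c g). split; [|split].
  - pose proof HSs as [_ [_ Hsc]]. specialize (Hsc c _ _ H).
    rewrite vscal_addv, vscal_mul in Hsc. rewrite vscal_mul.
    replace (Cmul (lam s) c) with (Cmul c (lam s)) by (apply Cx_ext; simpl; ring). exact Hsc.
  - apply op_scal; auto.
  - apply proj_scal; auto. apply P_csub.
Qed.

Lemma Kr_0 s : s <> 0 -> Kr s vzero vzero.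
Proof.
  intro Hs. destruct (Kr_total s vzero Hs) as [k Hk].
  pose proof (Kr_sub _ _ _ _ _ Hk Hk). rewrite !vsub_self in H. exact H.
Qed.

Hypothesis Hcomp : rel_compact (rel_comp (orth_proj (perp (img_at S vzero))) (op_part A)) (op_part S).

Lemma Kr_bound : exists N, N > 0 /\ forall s, Rabs s >= N -> forall u k, Kr s u k -> norm k <= /2 * norm u.
Proof.
  apply NNPP. intro Hn.
  assert (Hseq : forall n : nat, exists p : R * (X * X), Rabs (fst p) >= INR n + 1 /\
     Kr (fst p) (fst (snd p)) (snd (snd p)) /\ norm (fst (snd p)) = 1 /\ norm (snd (snd p)) > /2).
  { intro n. set (N := INR n + 1). assert (HN : N > 0) by (unfold N; pose proof (pos_INR n); lra).
    destruct (classic (exists s u k, Rabs s >= N /\ Kr s u k /\ norm k > /2 * norm u)) as [[s [u [k [Hs [Hk Hb]]]]]|Hne].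
    2:{ exfalso. apply Hn. exists N. split; auto. intros s Hs u k Hk. apply Rnot_lt_le. intro Hlt.
        apply Hne. exists s, u, k. auto. }
    assert (Hs0 : s <> 0) by (intro; subst; rewrite Rabs_R0 in Hs; lra).
    assert (Hu : norm u > 0).
    { destruct (Rle_lt_or_eq_dec 0 (norm u) (norm_ge0 u)) as [|E]; [lra|].
      exfalso. symmetry in E. apply norm_zero in E. subst u.
      pose proof (Kr_fun s _ _ _ Hs0 Hk (Kr_0 s Hs0)). subst k. rewrite norm_0 in Hb. lra. }
    assert (Hiu : 0 < / norm u) by (apply Rinv_0_lt_compat; lra).
    exists (s, (vscal (rc (/ norm u)) u, vscal (rc (/ norm u)) k)). simpl. split; [|split; [|split]].
    - exact Hs.
    - apply Kr_scal; auto.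
    - rewrite norm_rc, Rabs_pos_eq by lra. field; lra.
    - rewrite norm_rc, Rabs_pos_eq by lra.
      apply (Rmult_lt_reg_l (norm u)); auto.
      replace (norm u * (/ norm u * norm k)) with (norm k) by (field; lra). lra. }
  destruct (choice_fun _ Hseq) as [F HF].
  set (ss := fun n => fst (F n)). set (us := fun n => fst (snd (F n))). set (ks := fun n => snd (snd (F n))).
  assert (Hxg : forall n, exists p : X * X, S (fst p) (vadd (us n) (vscal (lam (ss n)) (fst p))) /\
            op_part A (fst p) (snd p) /\ orth_proj P (snd p) (ks n)).
  { intro n. destruct (HF n) as [_ [[x [g H]] _]]. exists (x, g). exact H. }
  destruct (choice_fun _ Hxg) as [G HG].
  set (xs := fun n => fst (G n)). set (gs := fun n => snd (G n)).
  assert (Hv : forall n, exists v, op_part S (xs n) v /\ norm v <= norm (vadd (us n) (vscal (lam (ss n)) (xs n)))).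
  { intro n. apply opS_ex. apply (HG n). }
  destruct (choice_fun _ Hv) as [vs Hvs].
  assert (Hbd : forall n, norm (vadd (us n) (vscal (lam (ss n)) (xs n))) <= 1 /\ norm (xs n) <= / (INR n + 1)).
  { intro n. destruct (HG n) as [HS _]. change (fst (G n)) with (xs n) in HS.
    pose proof (S_ident (ss n) _ _ HS) as E. rewrite vsub_add_cancel in E.
    destruct (HF n) as [Hs [_ [Hu _]]].
    assert (Hu1 : nsq (us n) = 1) by (rewrite <- norm_sq; unfold us; rewrite Hu; ring).
    set (f := vadd (us n) (vscal (lam (ss n)) (xs n))) in *.
    set (x := xs n) in *. set (s := ss n) in *. change (fst (F n)) with s in Hs.
    pose proof (nsq_ge0 f). pose proof (nsq_ge0 x).
    assert (Hss : s * s = Rabs s * Rabs s) by (rewrite <- Rabs_mult, Rabs_pos_eq; nra).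
    pose proof (Rabs_pos s). pose proof (norm_ge0 x). pose proof (pos_INR n).
    split.
    assert (Hsx : 0 <= s * s * nsq x) by (apply Rmult_le_pos; nra).
    - apply le_sq; [apply norm_ge0|lra|]. rewrite norm_sq. lra.
    - assert (Hxs : norm x * Rabs s <= 1).
      { apply le_sq; [nra|lra|].
        replace (norm x * Rabs s * (norm x * Rabs s)) with ((norm x * norm x) * (Rabs s * Rabs s)) by ring.
        rewrite norm_sq, <- Hss. nra. }
      assert (norm x * (INR n + 1) <= 1) by nra.
      apply (Rmult_le_reg_r (INR n + 1)); [lra|].
      replace (/ (INR n + 1) * (INR n + 1)) with 1 by (field; lra). lra. }
  destruct (Hcomp xs vs ks 2) as [phi [l [Hphi Hconv]]].
  - intro n. apply (Hvs n).
  - intro n. exists (gs n). split; apply (HG n).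
  - intro n. destruct (Hbd n) as [B1 B2]. destruct (Hvs n) as [_ B3].
    pose proof (pos_INR n). assert (/ (INR n + 1) <= 1).
    { replace 1 with (/ 1) at 2 by apply Rinv_1. apply Rinv_le_contravar; lra. }
    lra.
  - assert (Hl_half : norm l >= /2).
    { apply Rnot_lt_ge. intro Hlt. destruct (Hconv (/2 - norm l) ltac:(lra)) as [N HN].
      pose proof (HN N (le_n N)) as HN'. cbv beta in HN'.
      pose proof (norm_sub_le (ks (phi N)) l).
      destruct (HF (phi N)) as [_ [_ [_ Hk]]]. change (snd (snd (F (phi N)))) with (ks (phi N)) in Hk. lra. }
    assert (Pl : P l).
    { pose proof P_csub as [_ [_ [_ Hcl]]]. apply (Hcl (fun n => ks (phi n)) l); auto.
      intro n. apply (HG (phi n)). }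
    assert (Hxconv : converges_to (fun n => xs (phi n)) vzero).
    { intros eps Heps. destruct (inv_small eps Heps) as [N HN]. exists N. intros n Hnn.
      rewrite vsub_0r. pose proof (proj2 (Hbd (phi n))). pose proof (inv_le n (phi n) (phi_ge phi Hphi n)).
      pose proof (HN n Hnn). lra. }
    assert (Hperp : forall z h, S z h -> inner l z = C0).
    { intros z h Hzh. destruct (HDom z (ex_intro _ h Hzh)) as [kz Hkz].
      rewrite <- (inner_0l kz).
      apply (inner_lim (fun n => ks (phi n)) (fun n => xs (phi n)) l vzero z kz Hconv Hxconv).
      intro n. destruct (HG (phi n)) as [_ [Hop Hq]].
      rewrite (Q_inner _ _ z Hq (dom_P z h Hzh)).
      apply (HAh _ _ (proj1 Hop)). exact Hkz. }
    pose proof (perpD_S0 l Hperp) as Sl.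
    assert (Hll : inner l l = C0) by (apply Pl; exact Sl).
    assert (l = vzero) by (apply nsq_zero; unfold nsq; rewrite Hll; reflexivity).
    subst l. rewrite norm_0 in Hl_half. lra.
Qed.

Lemma aux1 (a g k : X) : vadd (vsub a (vsub g k)) g = vadd a k.
Proof.
  unfold vsub. rewrite vopp_add, vopp_opp. rewrite <- vadd_assoc. f_equal.
  rewrite vadd_comm, vadd_assoc, vadd_opp, vadd_0l. reflexivity.
Qed.

Lemma aux2 (u w k : X) : vsub (vadd (vadd u w) k) w = vadd u k.
Proof.
  rewrite <- vadd_assoc, (vadd_comm _ w k), vadd_assoc. apply vsub_add_cancel.
Qed.

Lemma range_T s : s <> 0 -> (forall u k, Kr s u k -> norm k <= /2 * norm u) ->
  forall y, exists x h, rel_sum S A x h /\ y = vsub h (vscal (lam s) x).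
Proof.
  intros Hs Hb y.
  destruct (choice_fun (fun u k => Kr s u k) (fun u => Kr_total s u Hs)) as [K HK].
  assert (Klin : forall a b, K (vsub a b) = vsub (K a) (K b)).
  { intros a b. apply (Kr_fun s (vsub a b)); auto. apply Kr_sub; auto. }
  set (F := fun u => vsub y (K u)).
  destruct (banach F) as [u Hu].
  { intros a b. unfold F. rewrite vsub_sub4, vsub_self, vsub_0l, norm_opp, <- Klin. apply Hb, HK. }
  destruct (HK u) as [x [g [Hx [Hg Hq]]]].
  pose proof (rel_sub S _ _ _ _ HSs Hx (Q_S0 g (K u) Hq)) as Hf. rewrite vsub_0r in Hf.
  exists x, (vadd (vsub (vadd u (vscal (lam s) x)) (vsub g (K u))) g). split.
  - exists (vsub (vadd u (vscal (lam s) x)) (vsub g (K u))), g. split; auto. split; auto. apply Hg.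
  - rewrite aux1, aux2. unfold F in Hu.
    rewrite <- (vadd_sub_cancel y (K u)), Hu, vadd_comm. reflexivity.
Qed.

Hypothesis HTh : hermitian (rel_sum S A).

Lemma final : self_adjoint (rel_sum S A).
Proof.
  destruct Kr_bound as [N [HN Hb]].
  assert (R1 := range_T N ltac:(lra) (Hb N ltac:(rewrite Rabs_pos_eq; lra))).
  assert (R2 := range_T (-N) ltac:(lra) (Hb (-N) ltac:(rewrite Rabs_Ropp, Rabs_pos_eq; lra))).
  intros y g. split; [apply HTh|]. intro Hadj.
  destruct (R1 (vsub g (vscal (lam N) y))) as [x [h [Txh E1]]].
  assert (Adw : adjoint (rel_sum S A) (vsub y x) (vsub g h)).
  { intros z k Tzk. pose proof (Hadj z k Tzk) as H1. pose proof (HTh x h Txh z k Tzk) as H2.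
    rewrite !inner_subl.
    apply Cx_ext; [apply (f_equal re) in H1; apply (f_equal re) in H2 | apply (f_equal im) in H1; apply (f_equal im) in H2];
     simpl; lra. }
  assert (Egh : vsub g h = vscal (lam N) (vsub y x)).
  { rewrite vscal_sub. apply vsub_eq0. rewrite vsub_sub4, E1. apply vsub_self. }
  set (w := vsub y x) in *.
  destruct (R2 w) as [z [k [Tzk E2]]].
  pose proof (Adw z k Tzk) as Hzk. rewrite Egh, inner_scall in Hzk.
  assert (Hw : w = vzero).
  { apply nsq_zero. unfold nsq.
    replace (inner w w) with (inner w (vsub k (vscal (lam (-N)) z))) by (rewrite <- E2; reflexivity).
    rewrite inner_subr, inner_scalr. simpl.
    apply (f_equal re) in Hzk. simpl in Hzk. lra. }
  assert (y = x) by (apply vsub_eq0; exact Hw).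
  rewrite Hw, vscal_v0 in Egh. apply vsub_eq0 in Egh. subst. exact Txh.
Qed.

End Main.

Theorem theorem4p4 (X : HilbertSpace) (S A : X -> X -> Prop) :
  is_subspace S -> self_adjoint S ->
  is_subspace A -> is_closed A -> hermitian A ->
  is_closed (rel_sum S A) -> hermitian (rel_sum S A) ->
  (forall x, dom S x -> dom A x) ->
  (* Q : A(0)^⊥ -> S(0)^⊥ the orthogonal projection; Q A_s is S_s-compact *)
  rel_compact (rel_comp (orth_proj (perp (img_at S vzero))) (op_part A))
              (op_part S) ->
  self_adjoint (rel_sum S A).
Proof.
  intros HSs HSsa HAs HAc HAh _ HTh HDom Hcomp.
  exact (final S A HSs HSsa HAs HAc HAh HDom Hcomp HTh).
Qed.
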